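(* Let $N\ge1$ be an integer, $\sigma^2>0$, $R>0$, $\gamma>0$ and $\alpha\in(0,1]$. Consider the problem $$\min_{p_0,\dots,p_{N-1}\ge0}\ \frac{\gamma}{N}\sum_{n=0}^{N-1}p_n^{\alpha}\quad\text{s.t.}\quad \frac1N\sum_{n=0}^{N-1}\log_2\!\left(1+\frac{p_n}{\sigma^2}\right)=R.$$ Then every optimal solution allocates equal power to all active slots: for all $n,n'$, if $p_n>0$ and $p_{n'}>0$ then $p_n=p_{n'}$. *)

(* Defs.v *)
From HB Require Import structures.
From mathcomp Require Import all_boot all_order all_algebra.
From mathcomp Require Import all_classical all_reals all_analysis.
Set Implicit Arguments. Unset Strict Implicit. Unset Printing Implicit Defensive.
Import Order.TTheory GRing.Theory Num.Theory.
Local Open Scope ring_scope.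

Definition log2 {R : realType} (x : R) : R := ln x / ln 2.

(* objective  (gamma / N) * sum_n p_n^alpha ; note powR 0 a = 0 for a <> 0 *)
Definition objective {R : realType} (N : nat) (gamma alpha : R) (p : 'I_N -> R) : R :=
  gamma / N%:R * \sum_(n < N) (p n `^ alpha).

Definition avg_rate {R : realType} (N : nat) (sigma2 : R) (p : 'I_N -> R) : R :=
  N%:R^-1 * \sum_(n < N) log2 (1 + p n / sigma2).

Definition feasible {R : realType} (N : nat) (sigma2 Rt : R) (p : 'I_N -> R) : Prop :=
  (forall n, 0 <= p n) /\ avg_rate sigma2 p = Rt.

Definition optimal {R : realType} (N : nat) (sigma2 Rt gamma alpha : R)
  (p : 'I_N -> R) : Prop :=
  feasible sigma2 Rt p /\
  forall q : 'I_N -> R, feasible sigma2 Rt q -> objective gamma alpha p <= objective gamma alpha q.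

(* Main.v *)
Require Import Defs.
From HB Require Import structures.
From mathcomp Require Import all_boot all_order all_algebra.
From mathcomp Require Import all_classical all_reals all_analysis.
From mathcomp Require Import ring lra.
Import Order.TTheory GRing.Theory Num.Theory.
Local Open Scope ring_scope.
Local Open Scope classical_set_scope.

Section Calc.
Context {R : realType}.

Lemma is_derive_comp1 (f g : R -> R) (x df dg : R) :
  is_derive x 1 f df -> is_derive (f x) 1 g dg -> is_derive x 1 (g \o f) (dg * df).
Proof.
move=> [hf1 hf2] [hg1 hg2]; split.
  apply/derivable1_diffP; apply: differentiable_comp; exact/derivable1_diffP.
by rewrite -derive1E derive1_comp // !derive1E hf2 hg2.
Qed.

Lemma is_derive_inv1 (f : R -> R) (x df : R) : f x != 0 ->
  is_derive x 1 f df -> is_derive x 1 (fun y => (f y)^-1) (- (f x)^-2 * df).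
Proof.
move=> fx0 [h1 h2]; split; first exact: derivableV.
by rewrite deriveV // h2.
Qed.

Lemma mvt' (f df : R -> R) (a b : R) : a < b ->
  (forall x, a <= x <= b -> is_derive x 1 f (df x)) ->
  exists2 c, a < c < b & f b - f a = df c * (b - a).
Proof.
move=> ab hd.
have h1 : forall x, x \in `]a, b[%R -> is_derive x 1 f (df x).
  by move=> x; rewrite in_itv /= => /andP[h1 h2]; apply: hd; rewrite !ltW.
have h2 := (@derivable_within_continuous R R f `[a, b]%R).
have h3 : {in `[a, b]%R, forall x, derivable f x 1}.
  move=> x h; move: h; rewrite in_itv /= => h.
  by have [] := hd x h.
have [c cab e] := @MVT R f df a b ab h1 (h2 h3).
by exists c => //; move: cab; rewrite in_itv.
Qed.

Lemma is_derive_eq' (f : R -> R) (x a b : R) :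
  is_derive x 1 f a -> a = b -> is_derive x 1 f b.
Proof. by move=> h <-. Qed.

Lemma dD (f g : R -> R) (x df dg : R) : is_derive x 1 f df -> is_derive x 1 g dg ->
  is_derive x 1 (fun y => f y + g y) (df + dg).
Proof. move=> h1 h2; have := @is_deriveD R R R f g x 1 df dg h1 h2; exact. Qed.

Lemma dB (f g : R -> R) (x df dg : R) : is_derive x 1 f df -> is_derive x 1 g dg ->
  is_derive x 1 (fun y => f y - g y) (df - dg).
Proof. move=> h1 h2; have := @is_deriveB R R R f g x 1 df dg h1 h2; exact. Qed.

Lemma dMl (k : R) (f : R -> R) (x df : R) : is_derive x 1 f df ->
  is_derive x 1 (fun y => k * f y) (k * df).
Proof. move=> h1; have := @is_deriveZ R R R f k x 1 df h1; exact. Qed.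

Lemma dC (c x : R) : is_derive x 1 (fun _ : R => c) 0.
Proof. have := is_derive_cst c x 1; exact. Qed.
End Calc.
Arguments is_derive_comp1 {R f g x df dg}.
Arguments is_derive_eq' {R f x a b}.
Arguments dD {R f g x df dg}.
Arguments mvt' {R f df a b}.
Arguments dB {R f g x df dg}.
Arguments dMl {R} k {f x df}.
Section A.
Variable R : realType.
Variables (s P al : R).
Definition phi (t : R) := P / (s + t) - s.

Lemma d_shift (t : R) : is_derive t 1 (fun y : R => s + y) 1.
Proof.
have := @is_deriveD R R R (cst s) id t 1 0 1 _ _.
by rewrite add0r => h; exact: h.
Qed.

Lemma d_phi (t : R) : 0 < s + t -> is_derive t 1 phi (- P * (s + t)^-2).
Proof.
move=> h.
have := @is_derive_inv1 R (fun y => s + y) t 1 (lt0r_neq0 h) (d_shift t) .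
move=> h2.
have := @is_deriveZ R R R (fun y => (s + y)^-1) P t 1 _ h2.
move=> h3.
have h4 := @is_deriveB R R R _ (cst s) t 1 _ 0 h3 (is_derive_cst s t 1).
have -> : phi = (P \*: (fun y : R => (s + y)^-1) - cst s).
  by apply/funext => y.
have -> : (- P * (s+t)^-2) = (P *: (- (s + t) ^- 2 * 1) - 0).
  by rewrite /GRing.scale /= subr0 mulr1 mulrN mulNr.
exact: h4.
Qed.

Definition F (t : R) := t `^ al + phi t `^ al.
Definition dF (t : R) := al * t `^ (al - 1) + al * phi t `^ (al - 1) * (- P * (s + t)^-2).
Definition L (t : R) := (al - 1) * ln t - (al - 1) * ln (phi t) - ln P + ln (s + t) + ln (s + t).
Definition dL (t : R) := (al - 1) * t^-1 - (al - 1) * ((phi t)^-1 * (- P * (s + t)^-2))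
  - 0 + (s + t)^-1 * 1 + (s + t)^-1 * 1.

Lemma d_F (t : R) : 0 < t -> 0 < phi t -> 0 < s + t -> is_derive t 1 F (dF t).
Proof.
move=> ht hf hst.
have h1 := is_derive1_powR al ht.
have h2 := is_derive_comp1 (d_phi t hst) (is_derive1_powR al hf).
have := dD h1 h2; exact.
Qed.

Lemma d_L (t : R) : 0 < t -> 0 < phi t -> 0 < s + t -> is_derive t 1 L (dL t).
Proof.
move=> ht hf hst.
have h1 := dMl (al - 1) (is_derive1_ln ht).
have h2 := dMl (al - 1) (is_derive_comp1 (d_phi t hst) (is_derive1_ln hf)).
have h3 := is_derive_comp1 (d_shift t) (is_derive1_ln hst).
have := dD (dD (dB (dB h1 h2) (dC (ln P) t)) h3) h3; exact.
Qed.

Lemma alg1 (a t f Q : R) : t != 0 -> f != 0 -> s + t != 0 -> Q = (s + f) * (s + t) ->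
  (s + t) * ((a - 1) * t^-1 - (a - 1) * (f^-1 * (- Q * (s + t)^-2))
  - 0 + (s + t)^-1 * 1 + (s + t)^-1 * 1) = 2 * a + (a - 1) * s * (t^-1 + f^-1).
Proof. by move=> ? ? ? ->; field; apply/and3P; split. Qed.

Lemma alg2 (x y : R) : 0 < s -> 0 < x -> x < y -> (s + y) * (s + y) < P ->
  y^-1 + (phi y)^-1 < x^-1 + (phi x)^-1.
Proof.
move=> hs hx hxy hyP.
have hy : 0 < y by lra.
have h1 : 0 < P - s * (s + x) by nra.
have h2 : 0 < P - s * (s + y) by nra.
have h3 : 0 < P - (s + x) * (s + y) by nra.
have h4 : 0 < P - s * s by nra.
have e : x^-1 + (phi x)^-1 - (y^-1 + (phi y)^-1) =
  (y - x) * (P - (s + x) * (s + y)) * (P - s * s) /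
  (x * y * (P - s * (s + x)) * (P - s * (s + y))).
  rewrite /phi. field.
  by rewrite !lt0r_neq0 //; lra.
rewrite -subr_gt0 e; apply: divr_gt0.
  by apply: mulr_gt0; [apply: mulr_gt0|]; lra.
by apply: mulr_gt0; [apply: mulr_gt0; [apply: mulr_gt0|]|]; lra.
Qed.

Definition m := Num.sqrt P - s.

Lemma r_facts : 0 < s -> s * s < P ->
  [/\ 0 < Num.sqrt P, Num.sqrt P * Num.sqrt P = P & s < Num.sqrt P].
Proof.
move=> hs hP.
have hP0 : 0 < P by nra.
have h0 : 0 < Num.sqrt P by rewrite sqrtr_gt0.
have e : Num.sqrt P * Num.sqrt P = P by rewrite -expr2 sqr_sqrtr // ltW.
split => //; nra.
Qed.

Lemma dom (t : R) : 0 < s -> s * s < P -> 0 < t -> t <= m ->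
  [/\ 0 < phi t, 0 < s + t & (s + t) * (s + t) <= P].
Proof.
move=> hs hP ht htm.
have [h0 e hsr] := r_facts hs hP.
have hst : 0 < s + t by lra.
have hb : (s + t) * (s + t) <= P by move: htm; rewrite /m => htm; nra.
split => //.
by rewrite /phi subr_gt0 ltr_pdivlMr //; nra.
Qed.

Lemma m_pos : 0 < s -> s * s < P -> 0 < m.
Proof. by move=> hs hP; have [? ? ?] := r_facts hs hP; rewrite /m; lra. Qed.

Lemma phi_m : 0 < s -> s * s < P -> phi m = m.
Proof.
move=> hs hP; have [h0 e hsr] := r_facts hs hP.
have -> : phi m = P / Num.sqrt P - s by rewrite /phi /m [s + _]addrC subrK.
rewrite -{1}e mulfK /m //; exact: lt0r_neq0.
Qed.

Lemma L_m : 0 < s -> s * s < P -> L m = 0.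
Proof.
move=> hs hP; have [h0 e hsr] := r_facts hs hP.
rewrite /L phi_m // subrr sub0r.
have -> : s + m = Num.sqrt P by rewrite /m [s + _]addrC subrK.
rewrite -addrA -lnM ?posrE // e; lra.
Qed.

Lemma Glem (x y : R) : 0 < s -> s * s < P -> 0 < al -> al <= 1 ->
  0 < x -> x < y -> y < m -> 0 <= dL x -> dL y <= 0 -> False.
Proof.
move=> hs hP ha0 ha1 hx hxy hym hdx hdy.
have [fx sx bx] := dom x hs hP hx (ltW (lt_trans hxy hym)).
have hy : 0 < y by lra.
have [fy sy by'] := dom y hs hP hy (ltW hym).
have [h0 e hsr] := r_facts hs hP.
have hyP : (s + y) * (s + y) < P by move: hym; rewrite /m => hym; nra.
have H := alg2 x y hs hx hxy hyP.
have eP t : 0 < s + t -> P = (s + phi t) * (s + t).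
  by move=> ht; rewrite /phi addrC subrK mulfVK //; exact: lt0r_neq0.
have Gx := alg1 al x (phi x) P (lt0r_neq0 hx) (lt0r_neq0 fx) (lt0r_neq0 sx) (eP x sx).
have Gy := alg1 al y (phi y) P (lt0r_neq0 hy) (lt0r_neq0 fy) (lt0r_neq0 sy) (eP y sy).
rewrite -/(dL x) in Gx; rewrite -/(dL y) in Gy.
have gx : 0 <= (s + x) * dL x by apply: mulr_ge0; lra.
have gy : (s + y) * dL y <= 0 by rewrite pmulr_rle0.
set Hx := x^-1 + (phi x)^-1 in H Gx.
set Hy := y^-1 + (phi y)^-1 in H Gy.
case: (ltrP al 1) => ha.
  have : 0 < (1 - al) * s * (Hx - Hy) by apply: mulr_gt0; [apply: mulr_gt0|]; lra.
  nra.
have e1 : al = 1 by apply/eqP; rewrite eq_le ha1 ha.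
rewrite e1 in Gy.
lra.
Qed.

Lemma pattern (t1 t2 : R) : 0 < s -> s * s < P -> 0 < al -> al <= 1 ->
  0 < t1 -> t1 < t2 -> t2 < m -> L t1 <= 0 -> L t2 < 0.
Proof.
move=> hs hP ha0 ha1 h1 h12 h2m hL1.
rewrite ltNge; apply/negP => hL2.
have hm := m_pos hs hP.
have dv x : t1 <= x <= m -> is_derive x 1 L (dL x).
  move=> /andP[hx1 hxm].
  have hx : 0 < x by lra.
  have [fx sx _] := dom x hs hP hx hxm.
  exact: d_L.
have [c1 /andP[c1a c1b] e1] : exists2 c, t1 < c < t2 & L t2 - L t1 = dL c * (t2 - t1).
  by apply: mvt' => // x /andP[? ?]; apply: dv; apply/andP; split; lra.
have [c2 /andP[c2a c2b] e2] : exists2 c, t2 < c < m & L m - L t2 = dL c * (m - t2).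
  by apply: mvt' => // x /andP[? ?]; apply: dv; apply/andP; split; lra.
rewrite L_m // in e2.
apply: (Glem c1 c2 hs hP ha0 ha1); try lra.
  have : 0 <= dL c1 * (t2 - t1) by lra.
  by rewrite pmulr_lge0 // subr_gt0.
have : dL c2 * (m - t2) <= 0 by lra.
by rewrite pmulr_lle0 // subr_gt0.
Qed.

Lemma sgn (t : R) : 0 < s -> 0 < P -> 0 < t -> 0 < phi t -> 0 < al ->
  (0 < L t -> 0 < dF t) /\ (L t < 0 -> dF t < 0).
Proof.
move=> hs hP0 ht hf ha0.
have hu : 0 < s + t by lra.
set u := s + t.
have hA : 0 < t `^ (al - 1) by apply: powR_gt0.
have hF : 0 < phi t `^ (al - 1) by apply: powR_gt0.
have hB : 0 < phi t `^ (al - 1) * P by apply: mulr_gt0.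
have huu : 0 < u * u by apply: mulr_gt0.
have hAu : 0 < t `^ (al - 1) * (u * u) by apply: mulr_gt0.
have eF : dF t = al * (t `^ (al - 1) * (u * u) - phi t `^ (al - 1) * P) / (u * u).
  rewrite /dF -/u; field; exact: lt0r_neq0.
have eL : L t = ln (t `^ (al - 1) * (u * u)) - ln (phi t `^ (al - 1) * P).
  rewrite lnM ?posrE // lnM ?posrE // lnM ?posrE // !ln_powR /L -/u; lra.
split => hL.
  rewrite eF; apply: divr_gt0 => //; apply: mulr_gt0 => //.
  rewrite subr_gt0 -ltr_ln ?posrE //; lra.
rewrite eF pmulr_llt0 ?invr_gt0 // pmulr_rlt0 //.
rewrite subr_lt0 -ltr_ln ?posrE //; lra.
Qed.

Lemma improve (t0 : R) : 0 < s -> s * s < P -> 0 < al -> al <= 1 ->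
  0 < t0 -> t0 < m -> exists t1, [/\ 0 < t1, t1 <= m & F t1 < F t0].
Proof.
move=> hs hP ha0 ha1 ht0 htm.
have hP0 : 0 < P by nra.
have dv x : 0 < x -> x <= m -> is_derive x 1 F (dF x).
  by move=> hx hxm; have [fx sx _] := dom x hs hP hx hxm; exact: d_F.
case: (ltrP 0 (L t0)) => hL.
  exists (t0 / 2); split; try lra.
  have [c /andP[ca cb] e] : exists2 c, t0 / 2 < c < t0 & F t0 - F (t0 / 2) = dF c * (t0 - t0 / 2).
    by apply: mvt'; [lra| move=> x /andP[? ?]; apply: dv; lra].
  have hc : 0 < c by lra.
  have [fc _ _] := dom c hs hP hc (ltW (lt_trans cb htm)).
  have Lc : 0 < L c.
    rewrite ltNge; apply/negP => Lc.
    have := pattern c t0 hs hP ha0 ha1 hc cb htm Lc; lra.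
  have [hd _] := sgn c hs hP0 hc fc ha0.
  have := hd Lc => dc.
  have : 0 < dF c * (t0 - t0 / 2) by apply: mulr_gt0; lra.
  lra.
exists ((t0 + m) / 2); split; try lra.
have [c /andP[ca cb] e] : exists2 c, t0 < c < (t0 + m) / 2 & F ((t0 + m) / 2) - F t0 = dF c * ((t0 + m) / 2 - t0).
  by apply: mvt'; [lra| move=> x /andP[? ?]; apply: dv; lra].
have hc : 0 < c by lra.
have hcm : c < m by lra.
have [fc _ _] := dom c hs hP hc (ltW hcm).
have Lc : L c < 0 by apply: (pattern t0 c hs hP ha0 ha1 ht0 ca hcm hL).
have [_ hd] := sgn c hs hP0 hc fc ha0.
have := hd Lc => dc.
have : dF c * ((t0 + m) / 2 - t0) < 0 by rewrite pmulr_llt0 //; lra.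
lra.
Qed.
End A.
Arguments phi {R}.
Arguments F {R}.
Arguments m {R}.
Arguments dom {R}.
Arguments improve {R}.
Arguments r_facts {R}.

Lemma ln_pair (R : realType) (s P t : R) : 0 < s -> 0 < t -> 0 < phi s P t ->
  ln (1 + t / s) + ln (1 + phi s P t / s) = ln (P / (s * s)).
Proof.
move=> hs ht hf.
rewrite -lnM ?posrE; last 2 first.
- by apply: addr_gt0 => //; apply: divr_gt0.
- by apply: addr_gt0 => //; apply: divr_gt0.
congr ln; rewrite /phi; field.
apply/andP; split; apply: lt0r_neq0 => //; lra.
Qed.

Theorem lemma3 (R : realType) (N : nat) (sigma2 Rt gamma alpha : R)
  (hN : (1 <= N)%N) (hsigma : 0 < sigma2) (hR : 0 < Rt) (hgamma : 0 < gamma)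
  (halpha0 : 0 < alpha) (halpha1 : alpha <= 1) (p : 'I_N -> R) :
  optimal sigma2 Rt gamma alpha p ->
  forall n n' : 'I_N, 0 < p n -> 0 < p n' -> p n = p n'.
Proof.
move=> [[hnn hrate] hopt].
suff key : forall a b : 'I_N, 0 < p a -> p a < p b -> False.
  move=> n n' hn hn'; case: (ltgtP (p n) (p n')) => h //.
  - by exfalso; apply: (key n n').
  - by exfalso; apply: (key n' n).
move=> a b ha hab.
have hb : 0 < p b by lra.
have ba : b != a by apply/eqP => e; rewrite e in hab; lra.
set P := (sigma2 + p a) * (sigma2 + p b).
have hP : sigma2 * sigma2 < P.
  have h1 : 0 < sigma2 * p a by apply: mulr_gt0.
  have h2 : 0 < sigma2 * p b by apply: mulr_gt0.
  have h3 : 0 < p a * p b by apply: mulr_gt0.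
  have -> : P = sigma2 * sigma2 + sigma2 * p a + sigma2 * p b + p a * p b by rewrite /P; ring.
  lra.
have hpa : phi sigma2 P (p a) = p b.
  rewrite /phi /P; field; by rewrite lt0r_neq0 // addr_gt0.
have htm : p a < m sigma2 P.
  have [h0 e hsr] := r_facts sigma2 P hsigma hP.
  have hh : (sigma2 + p a) * (sigma2 + p a) < P by rewrite /P ltr_pM2l; lra.
  rewrite /m; rewrite ltNge; apply/negP => hc.
  have hc' : Num.sqrt P <= sigma2 + p a by lra.
  have : Num.sqrt P * Num.sqrt P <= (sigma2 + p a) * (sigma2 + p a).
    by apply: ler_pM => //; lra.
  lra.
have [t1 [ht1 ht1m hF]] := improve sigma2 P alpha (p a) hsigma hP halpha0 halpha1 ha htm.
have [f1 _ _] := dom sigma2 P t1 hsigma hP ht1 ht1m.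
pose q := fun i => if i == a then t1 else if i == b then phi sigma2 P t1 else p i.
have qa : q a = t1 by rewrite /q eqxx.
have qb : q b = phi sigma2 P t1 by rewrite /q (negbTE ba) eqxx.
have qo : forall i, (i != a) && (i != b) -> q i = p i.
  by move=> i /andP[ia ib]; rewrite /q (negbTE ia) (negbTE ib).
have hq : feasible sigma2 Rt q.
  split.
    move=> i; rewrite /q; case: eqP => _; first lra.
    case: eqP => _; [lra | exact: hnn].
  rewrite -hrate /avg_rate; congr (_ * _).
  rewrite (bigD1 a) // [in RHS](bigD1 a) // (bigD1 b) // [in RHS](bigD1 b) //=.
  rewrite !addrA; congr (_ + _).
    rewrite qa qb /log2 -!mulrDl; congr (_ / _).
    by rewrite -hpa !ln_pair // hpa.
  by apply: eq_bigr => i hi; rewrite qo.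
have := hopt q hq; rewrite /objective => hle.
have hN0 : 0 < N%:R :> R by rewrite ltr0n.
have hc : 0 < gamma / N%:R by apply: divr_gt0.
rewrite ler_pM2l // in hle.
move: hle.
rewrite (bigD1 a) // [in X in _ <= X](bigD1 a) // (bigD1 b) // [in X in _ <= X](bigD1 b) //=.
rewrite qa qb.
rewrite (eq_bigr (fun i => p i `^ alpha) (fun i hi => congr1 (fun x => x `^ alpha) (qo i hi))).
move: hF; rewrite /F hpa => hF.
lra.
Qed.
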